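(* For every positive integer $k$ and every prime number $p$, $$v_p\bigl(F_{kp,k}\bigr) = -k.$$
   Context: For $n,k \in \mathbb{N}$ with $n \geq k$, $$F_{n,k} = \sum_{\substack{i_1,\dots,i_k \in \mathbb{N}^* \\ i_1+\dots+i_k = n}} \frac{1}{i_1 i_2 \cdots i_k},$$ where $\mathbb{N}^*$ denotes the positive integers. $v_p$ denotes the $p$-adic valuation on $\mathbb{Q}^*$. *)

(* Defs.v *)
From HB Require Import structures.
From mathcomp Require Import all_boot all_order all_algebra.
Set Implicit Arguments. Unset Strict Implicit. Unset Printing Implicit Defensive.
Import Order.TTheory GRing.Theory Num.Theory.

Local Open Scope ring_scope.

(* Tuples are encoded as finite functions from ordinals k to ordinals n+1
   (every positive part is automatically <= n). *)
Definition F (n k : nat) : rat :=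
  \sum_(f : {ffun 'I_k -> 'I_n.+1} |
          [forall j, (0 < (f j : nat))%N] && ((\sum_(j < k) (f j : nat))%N == n))
     \prod_(j < k) ((f j : nat)%:R)^-1.

(* p-adic valuation of a rational number q = numq q / denq q
   (meaningful for q <> 0; gives 0 at q = 0). *)
Definition vp (p : nat) (q : rat) : int :=
  (logn p `|numq q|)%:Z - (logn p `|denq q|)%:Z.

(* Main.v *)
Require Import Defs.
From HB Require Import structures.
From mathcomp Require Import all_boot all_order all_algebra.
From mathcomp Require Import zify ring lra.
Import Order.TTheory GRing.Theory Num.Theory.
Local Open Scope ring_scope.

Lemma logn_prod (p : nat) (I : Type) (r : seq I) (E : I -> nat) :
  (forall i, (0 < E i)%N) ->
  logn p (\prod_(i <- r) E i) = (\sum_(i <- r) logn p (E i))%N.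
Proof.
move=> H; elim: r => [|i r IH]; first by rewrite !big_nil logn1.
rewrite !big_cons lognM ?IH //; by [apply: H | rewrite prodn_gt0].
Qed.

Lemma pa_le (p m : nat) : prime p -> (0 < m)%N -> (p * logn p m <= m)%N.
Proof.
move=> pp m0; apply: (@leq_trans (p ^ logn p m)); last first.
  by apply: dvdn_leq => //; apply: pfactor_dvdnn.
case: (logn p m) => [|a]; first by rewrite muln0.
rewrite expnS leq_mul2l ltn_expl ?orbT //; exact: prime_gt1.
Qed.

Lemma sum_eq_le (I : finType) (E1 E2 : I -> nat) :
  (forall i, E1 i <= E2 i)%N -> (\sum_i E2 i <= \sum_i E1 i)%N ->
  forall i, E1 i = E2 i.
Proof.
move=> H Hs i.
have L := @leqif_sum I predT (fun i => E1 i == E2 i) E1 E2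
  (fun i _ => leqif_eq (H i)).
have : (\sum_i E1 i == \sum_i E2 i) by rewrite eqn_leq Hs L.1.
by rewrite L.2 => /forallP /(_ i) /implyP /(_ isT) /eqP.
Qed.

Lemma key (k p : nat) (f : {ffun 'I_k -> 'I_(k * p).+1}) : prime p ->
  (forall j, 0 < (f j : nat))%N -> (\sum_(j < k) (f j : nat))%N = (k * p)%N ->
  (k <= logn p (\prod_(j < k) (f j : nat)))%N -> forall j, (f j : nat) = p.
Proof.
move=> pp H0 Hs; rewrite logn_prod // => HS.
have p0 := prime_gt0 pp.
have E1 : forall j, (p * logn p (f j))%N = f j.
  apply: sum_eq_le => [j|]; first exact: pa_le.
  by rewrite Hs -big_distrr /=; move: (leq_mul (leqnn p) HS); rewrite mulnC.
have S1 : (\sum_(j < k) logn p (f j))%N = k.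
  apply/eqP; rewrite -(eqn_pmul2l p0) big_distrr /=.
  under eq_bigr => j _ do rewrite E1.
  rewrite Hs.
  by rewrite eq_sym; apply/eqP; apply: mulnC.
have E2 : forall j, 1%N = logn p (f j).
  apply: (@sum_eq_le _ (fun _ => 1%N)) => [j|].
    rewrite lt0n; apply/eqP => e; have := H0 j; by rewrite -E1 e muln0.
  rewrite sum1_card card_ord; apply: eq_leq; exact: S1.
by move=> j; rewrite -E1 -E2 muln1.
Qed.

Definition pint (p : nat) (q : rat) :=
  exists (a : int) (b : nat), ~~ (p %| b)%N /\ q = a%:~R / b%:R.

Lemma pint_add p x y : prime p -> pint p x -> pint p y -> pint p (x + y).
Proof.
move=> pp [a1 [b1 [h1 ->]]] [a2 [b2 [h2 ->]]].
exists (a1 * b2%:Z + a2 * b1%:Z), (b1 * b2)%N; split.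
  by rewrite Euclid_dvdM // negb_or h1 h2.
have b10 : (b1%:R : rat) != 0 by rewrite pnatr_eq0; apply: contra h1 => /eqP ->.
have b20 : (b2%:R : rat) != 0 by rewrite pnatr_eq0; apply: contra h2 => /eqP ->.
rewrite rmorphD !rmorphM /=.
have e1 : ((b1%:Z)%:~R : rat) = b1%:R by [].
have e2 : ((b2%:Z)%:~R : rat) = b2%:R by [].
rewrite e1 e2; field; by rewrite b10 b20.
Qed.

Lemma vp_frac (p k : nat) (A : int) (b : nat) : prime p ->
  ~~ (p %| `|A|)%N -> ~~ (p %| b)%N ->
  vp p (A%:~R / (p ^ k * b)%:R) = - (k%:Z).
Proof.
move=> pp hA hb.
set B := (p ^ k * b)%N; set x : rat := _ / _.
have p0 := prime_gt0 pp.
have b0 : (0 < b)%N by rewrite lt0n; apply: contra hb => /eqP ->.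
have B0 : (0 < B)%N by rewrite muln_gt0 expn_gt0 p0 b0.
have A0 : A != 0 by apply: contra hA => /eqP ->.
have BR : (B%:R : rat) != 0 by rewrite pnatr_eq0 -lt0n.
have x0 : x != 0 by rewrite /x mulf_neq0 // ?intr_eq0 // invr_eq0.
have E : (numq x * B%:Z)%:~R = (A * denq x)%:~R :> rat.
  have E0 : (numq x)%:~R * B%:R = A%:~R * (denq x)%:~R :> rat.
    by rewrite numqE /x; field.
  move: E0; clearbody x B; rewrite !rmorphM /=; exact.
have E' := intr_inj E.
have E'' := congr1 absz E'; rewrite !abszM /= in E''.
have := congr1 (logn p) E''.
have n0 : (0 < `|numq x|)%N by rewrite absz_gt0 numq_eq0.
have d0 : (0 < `|denq x|)%N by rewrite absz_gt0 denq_neq0.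
have a0 : (0 < `|A|)%N by rewrite absz_gt0.
rewrite !lognM ?expn_gt0 ?p0 // pfactorK // (logn_coprime (m := b)) ?prime_coprime //.
rewrite (logn_coprime (m := `|A|)) ?prime_coprime //.
rewrite /vp => h; lia.
Qed.

Lemma pint0 p : prime p -> pint p 0.
Proof.
move=> pp; exists 0, 1%N; split; last by rewrite mul0r.
by rewrite dvdn1; case: p pp => [|[|]].
Qed.

Theorem lemma3 (k p : nat) (hk : (0 < k)%N) (hp : prime p) :
  vp p (F (k * p) k) = - (k%:Z).
Proof.
have p0 := prime_gt0 hp.
have pk : (p < (k * p).+1)%N by rewrite ltnS leq_pmull.
pose f0 : {ffun 'I_k -> 'I_(k * p).+1} := [ffun j => inord p].
have f0v : forall j, (f0 j : nat) = p by move=> j; rewrite ffunE inordK.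
set q : rat := p%:R.
have q0 : q != 0 by rewrite pnatr_eq0 -lt0n.
set c : rat := q^-1 ^+ k.
rewrite /F (bigD1 f0) /=; last first.
  apply/andP; split; first by apply/forallP => j; rewrite f0v.
  under eq_bigr => j _ do rewrite f0v.
  by rewrite big_const_ord iter_addn_0 mulnC.
have t0 : \prod_(j < k) ((f0 j : nat)%:R)^-1 = c :> rat.
  under eq_bigr => j _ do rewrite f0v.
  by rewrite prodr_const card_ord.
rewrite t0.
have [y [py ->]] : exists y, pint p y /\
   \sum_(f : {ffun 'I_k -> 'I_(k * p).+1} | ([forall j, (0 < (f j : nat))%N] &&
              ((\sum_(j < k) (f j : nat))%N == (k * p)%N)) && (f != f0))
       \prod_(j < k) ((f j : nat)%:R)^-1 = c * q * y.
  apply: (big_ind (fun z => exists y, pint p y /\ z = c * q * y)).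
  - by exists 0; split; [exact: pint0 | rewrite mulr0].
  - move=> _ _ [y1 [h1 ->]] [y2 [h2 ->]]; exists (y1 + y2); split.
      exact: pint_add.
    by rewrite mulrDr.
  move=> f /andP [/andP [/forallP H0 /eqP Hs] nf].
  rewrite prodfV -natr_prod.
  set P := (\prod_(j < k) (f j : nat))%N.
  have P0 : (0 < P)%N by rewrite prodn_gt0.
  have sk : (logn p P < k)%N.
    rewrite ltnNge; apply/negP => /(@key _ _ f hp H0 Hs) H.
    by move/eqP: nf; apply; apply/ffunP => j; apply: val_inj; rewrite /= H f0v.
  have [m cm Pm] := pfactor_coprime hp P0.
  set s := logn p P in sk Pm.
  have m0 : (0 < m)%N by move: P0; rewrite Pm muln_gt0 => /andP [].
  exists ((p ^ (k - s - 1))%N%:Z%:~R / m%:R); split.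
    by exists (p ^ (k - s - 1))%N%:Z, m; split; last by []; rewrite -prime_coprime.
  rewrite Pm natrM natrX /c exprVn.
  have -> : q ^+ k = q ^+ s * q * q ^+ (k - s - 1).
    by rewrite -exprSr -exprD; congr (_ ^+ _); lia.
  have mR : (m%:R : rat) != 0 by rewrite pnatr_eq0 -lt0n.
  have -> : ((p ^ (k - s - 1))%N%:Z%:~R : rat) = q ^+ (k - s - 1) by rewrite /q -natrX.
  have qs : q ^+ s != 0 by rewrite expf_neq0.
  have qd : q ^+ (k - s - 1) != 0 by rewrite expf_neq0.
  field.
  by rewrite qs qd q0 mR.
move: py => [a [b [hb ->]]].
have bR : (b%:R : rat) != 0 by rewrite pnatr_eq0; apply: contra hb => /eqP ->.
have -> : c + c * q * (a%:~R / b%:R) = (b%:Z + p%:Z * a)%:~R / (p ^ k * b)%N%:R.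
  rewrite rmorphD rmorphM /= natrM natrX /c exprVn.
  have e1 : ((b%:Z)%:~R : rat) = b%:R by [].
  have e2 : ((p%:Z)%:~R : rat) = q by [].
  rewrite e1 e2.
  have qk : q ^+ k != 0 by rewrite expf_neq0.
  field.
  by rewrite qk bR.
apply: vp_frac => //.
apply: contra hb => h.
have {}h : (p%:Z %| b%:Z + p%:Z * a)%Z by rewrite dvdzE.
have h2 : (p%:Z %| p%:Z * a)%Z by apply: dvdz_mulr; exact: dvdzz.
have := h; rewrite (rpredDr _ h2); by rewrite dvdzE.
Qed.
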